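(* Let $(N,+,* )$ be a planar nearring presented by $(\Phi,R,M)$, and let $d\in D(N)$ be nonzero and not a zero multiplier. Then $d\Phi^*=d\Phi\cup\{0\}$ is a subnearring of $N$ which is a planar nearfield (with multiplicative identity $r_d$).
   Context: A (right) nearring $(N,+,* )$ is a set with a group $(N,+)$, a semigroup $(N,* )$, and right distributivity $(a+b)*c=a*c+b*c$. $N$ is planar if the relation $a\cong b$ ($x*a=x*b$ for all $x$) has at least $3$ classes and for all $a,b,c$ with $a\not\cong b$ the equation $x*a=x*b+c$ has a unique solution. A nearfield is a nearring in which $(N\setminus\{0\},* )$ is a group; a subnearring is a subset closed under $+$, additive inverses and $*$. Every planar nearring arises as follows, and we always consider it so presented. $\Phi\le \mathrm{Aut}(N,+)$ acts on the right, is fixed point free, and $n\mapsto -n+n\phi$ is bijective for each $\phi\ne\mathrm{id}$. $R$ is a set of representatives of the $\Phi$-orbits of $N\setminus\{0\}$ and $M\subseteq R$. Each $a\ne0$ is uniquely $a=r_a\phi_a$, $r_a\in R$, $\phi_a\in\Phi$. Multiplication: $a*b=0$ if $b=0$ or $r_b\in M$, else $a*b=a\phi_b$ (and $0*b=0$). The zero multipliers are the elements of $M\Phi\cup\{0\}$, i.e. those $n$ with $x*n=0$ for all $x$. $D(N)=\{n: n*(a+b)=n*a+n*b\ \forall a,b\}$. *)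

(* Defs.v *)
From Stdlib Require Import Classical.
Set Implicit Arguments.

Section Defs.
Variable N : Type.
Variables (add : N -> N -> N) (zero : N) (opp : N -> N).

Definition group_ax : Prop :=
  (forall a b c, add a (add b c) = add (add a b) c) /\
  (forall a, add zero a = a /\ add a zero = a) /\
  (forall a, add (opp a) a = zero /\ add a (opp a) = zero).

Definition bij (f : N -> N) : Prop :=
  (forall x y, f x = f y -> x = y) /\ (forall y, exists x, f x = y).

Definition is_aut (f : N -> N) : Prop :=
  bij f /\ forall a b, f (add a b) = add (f a) (f b).

(* Phi <= Aut(N,+) is a subgroup (functions considered up to pointwise equality);
   elements act on the right: n phi := phi n. *)
Definition aut_subgroup (Phi : (N -> N) -> Prop) : Prop :=
  (forall f, Phi f -> is_aut f) /\
  (exists f, Phi f /\ forall x, f x = x) /\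
  (forall f g, Phi f -> Phi g -> exists h, Phi h /\ forall x, h x = g (f x)) /\
  (forall f, Phi f -> exists g, Phi g /\ forall x, g (f x) = x /\ f (g x) = x).

Definition ferrero_group (Phi : (N -> N) -> Prop) : Prop :=
  aut_subgroup Phi /\
  (forall f n, Phi f -> f n = n -> n = zero \/ forall x, f x = x) /\
  (forall f, Phi f -> (exists x, f x <> x) -> bij (fun n => add (opp n) (f n))).

Definition orbit_reps (Phi : (N -> N) -> Prop) (R M : N -> Prop) : Prop :=
  (forall r, R r -> r <> zero) /\
  (forall a, a <> zero -> exists r f, R r /\ Phi f /\ a = f r) /\
  (forall r1 r2 f1 f2, R r1 -> R r2 -> Phi f1 -> Phi f2 -> f1 r1 = f2 r2 -> r1 = r2) /\
  (forall r, M r -> R r).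

Definition presented_mul (Phi : (N -> N) -> Prop) (R M : N -> Prop)
  (mul : N -> N -> N) : Prop :=
  (forall a, mul a zero = zero) /\
  (forall a b r f, R r -> Phi f -> b = f r ->
     (M r -> mul a b = zero) /\ (~ M r -> mul a b = f a)).

(* The notions below are relative to a subset S of N (S = everything for N itself). *)
Variable mul : N -> N -> N.

Definition nearring_on (S : N -> Prop) : Prop :=
  S zero /\
  (forall a b, S a -> S b -> S (add a b)) /\
  (forall a, S a -> S (opp a)) /\
  (forall a b, S a -> S b -> S (mul a b)) /\
  (forall a b c, S a -> S b -> S c -> add a (add b c) = add (add a b) c) /\
  (forall a, S a -> add zero a = a /\ add a zero = a) /\
  (forall a, S a -> add (opp a) a = zero /\ add a (opp a) = zero) /\
  (forall a b c, S a -> S b -> S c -> mul a (mul b c) = mul (mul a b) c) /\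
  (forall a b c, S a -> S b -> S c -> mul (add a b) c = add (mul a c) (mul b c)).

Definition mequiv (S : N -> Prop) (a b : N) : Prop :=
  forall x, S x -> mul x a = mul x b.

Definition planar_on (S : N -> Prop) : Prop :=
  nearring_on S /\
  (exists a b c, S a /\ S b /\ S c /\
     ~ mequiv S a b /\ ~ mequiv S a c /\ ~ mequiv S b c) /\
  (forall a b c, S a -> S b -> S c -> ~ mequiv S a b ->
     exists x, S x /\ mul x a = add (mul x b) c /\
       forall y, S y -> mul y a = add (mul y b) c -> y = x).

Definition subnearring (S : N -> Prop) : Prop :=
  S zero /\
  (forall a b, S a -> S b -> S (add a b)) /\
  (forall a, S a -> S (opp a)) /\
  (forall a b, S a -> S b -> S (mul a b)).

Definition nearfield_on (S : N -> Prop) : Prop :=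
  nearring_on S /\
  (forall a b, S a -> S b -> a <> zero -> b <> zero -> mul a b <> zero) /\
  (exists e, S e /\ e <> zero /\
     forall x, S x -> x <> zero ->
       mul e x = x /\ mul x e = x /\
       exists y, S y /\ y <> zero /\ mul x y = e /\ mul y x = e).

Definition distributive_elt (d : N) : Prop :=
  forall a b, mul d (add a b) = add (mul d a) (mul d b).

Definition zero_multiplier (n : N) : Prop := forall x, mul x n = zero.

End Defs.

Definition orbit0 {N : Type} (zero : N) (Phi : (N -> N) -> Prop) (d : N) : N -> Prop :=
  fun x => x = zero \/ exists f, Phi f /\ x = f d.

(* Main.v *)
Require Import Defs.
From Stdlib Require Import Classical.

Theorem mainTheorem3 (N : Type) (add : N -> N -> N) (zero : N) (opp : N -> N)
  (mul : N -> N -> N) (Phi : (N -> N) -> Prop) (R M : N -> Prop)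
  (Hgrp : group_ax add zero opp)
  (HPhi : ferrero_group add zero opp Phi)
  (HRM : orbit_reps zero Phi R M)
  (Hmul : presented_mul zero Phi R M mul)
  (Hplanar : planar_on add zero opp mul (fun _ => True))
  (d : N)
  (HdD : distributive_elt add mul d)
  (Hd0 : d <> zero)
  (Hdz : ~ zero_multiplier zero mul d) :
  subnearring add zero opp mul (orbit0 zero Phi d) /\
  nearfield_on add zero opp mul (orbit0 zero Phi d) /\
  planar_on add zero opp mul (orbit0 zero Phi d) /\
  (forall r f, R r -> Phi f -> d = f r ->
     orbit0 zero Phi d r /\
     forall x, orbit0 zero Phi d x -> mul r x = x /\ mul x r = x).
Proof.
  destruct Hgrp as [Hassoc [Hid Hinv]].
  destruct HPhi as [[Haut [[e [He He']] [Hcomp Hinvf]]] [Hfpf Hbij]].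
  destruct HRM as [HR0 [Hrep [Huniq HMR]]].
  destruct Hmul as [Hmul0 HmulR].
  destruct Hplanar as [HNR [H3 Hsol]].
  pose proof HNR as HNR'.
  destruct HNR' as [_ [_ [_ [_ [_ [_ [_ [Hmassoc Hrdist]]]]]]]].
  assert (Hcanc : forall x, x = add x x -> x = zero).
  { intros x Hx. assert (H := f_equal (add (opp x)) Hx).
    rewrite Hassoc in H. destruct (Hinv x) as [H1 _]. rewrite H1 in H.
    destruct (Hid x) as [H2 _]. rewrite H2 in H. symmetry; exact H. }
  assert (Hopp : forall u v, add u v = zero -> v = opp u).
  { intros u v H. destruct (Hid v) as [H1 _]. rewrite <- H1.
    destruct (Hinv u) as [H2 _]. rewrite <- H2. rewrite <- Hassoc, H.
    apply Hid. }
  assert (Hf0 : forall f, Phi f -> f zero = zero).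
  { intros f Hf. apply Hcanc. destruct (Haut f Hf) as [_ Ha].
    rewrite <- Ha. f_equal. symmetry; apply Hid. }
  assert (Hfinj : forall f x, Phi f -> f x = zero -> x = zero).
  { intros f x Hf H. destruct (Haut f Hf) as [[Hi _] _]. apply Hi.
    rewrite H; symmetry; apply Hf0; exact Hf. }
  destruct (Hrep d Hd0) as [r [f0 [Hr [Hf0p Hdr]]]].
  assert (HnM : ~ M r).
  { intro HM. apply Hdz. intro x. exact (proj1 (HmulR x d r f0 Hr Hf0p Hdr) HM). }
  assert (HmR : forall a h, Phi h -> mul a (h r) = h a).
  { intros a h Hh. exact (proj2 (HmulR a (h r) r h Hr Hh eq_refl) HnM). }
  set (S := orbit0 zero Phi d).
  assert (HS : forall x, S x <-> x = zero \/ exists h, Phi h /\ x = h r).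
  { intro x; unfold S, orbit0; split.
    - intros [H|[f [Hf Hx]]]; [left; exact H| right].
      destruct (Hcomp f0 f Hf0p Hf) as [h [Hh Hh']].
      exists h; split; [exact Hh|]. rewrite Hh', Hx, Hdr; reflexivity.
    - intros [H|[h [Hh Hx]]]; [left; exact H| right].
      destruct (Hinvf f0 Hf0p) as [g [Hg Hg']].
      destruct (Hcomp g h Hg Hh) as [k [Hk Hk']].
      exists k; split; [exact Hk|]. rewrite Hk', Hdr, (proj1 (Hg' r)). exact Hx. }
  assert (Himg : forall y, S (mul d y)).
  { intro y. destruct (classic (y = zero)) as [Hy|Hy].
    - subst y. rewrite Hmul0. left; reflexivity.
    - destruct (Hrep y Hy) as [r' [k [Hr' [Hk Hyk]]]].
      destruct (classic (M r')) as [HM|HM].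
      + rewrite (proj1 (HmulR d y r' k Hr' Hk Hyk) HM). left; reflexivity.
      + rewrite (proj2 (HmulR d y r' k Hr' Hk Hyk) HM). right. exists k; auto. }
  assert (Hsurj : forall s, S s -> exists y, s = mul d y).
  { intros s [Hs|[f [Hf Hs]]].
    - exists zero. rewrite Hmul0; exact Hs.
    - exists (f r). rewrite HmR by exact Hf. exact Hs. }
  assert (HSd : S d). { right. exists e; auto. }
  assert (HSmul : forall a b, S a -> S b -> S (mul a b)).
  { intros a b Ha Hb. apply HS in Hb. destruct Hb as [Hb|[h [Hh Hb]]].
    - subst b. rewrite Hmul0. left; reflexivity.
    - subst b. rewrite HmR by exact Hh. apply HS in Ha.
      destruct Ha as [Ha|[k [Hk Ha]]].
      + subst a. rewrite Hf0 by exact Hh. left; reflexivity.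
      + subst a. destruct (Hcomp k h Hk Hh) as [m [Hm Hm']].
        apply HS. right. exists m; split; [exact Hm|]. symmetry; apply Hm'. }
  assert (HSadd : forall a b, S a -> S b -> S (add a b)).
  { intros a b Ha Hb. destruct (Hsurj a Ha) as [y1 ->].
    destruct (Hsurj b Hb) as [y2 ->]. rewrite <- HdD. apply Himg. }
  assert (HSopp : forall a, S a -> S (opp a)).
  { intros a Ha. destruct (Hsurj a Ha) as [y ->].
    assert (H : add (mul d y) (mul d (opp y)) = zero).
    { rewrite <- HdD, (proj2 (Hinv y)). apply Hmul0. }
    rewrite <- (Hopp _ _ H). apply Himg. }
  assert (HS0 : S zero). { left; reflexivity. }
  assert (HSr : S r). { apply HS. right. exists e; auto. }
  assert (Hr0 : r <> zero) by (apply HR0; exact Hr).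
  assert (Hleft : forall x, S x -> mul r x = x).
  { intros x Hx. apply HS in Hx. destruct Hx as [Hx|[h [Hh Hx]]].
    - subst x; apply Hmul0.
    - subst x. apply HmR; exact Hh. }
  assert (Hright : forall x, mul x r = x).
  { intro x. rewrite <- (He' r) at 1. rewrite HmR by exact He. apply He'. }
  assert (Hsub : subnearring add zero opp mul S).
  { repeat split; auto. }
  assert (Hnr : nearring_on add zero opp mul S).
  { destruct HNR as [_ [_ [_ [_ [Ha [Hi [Hv [Hm Hd]]]]]]]].
    repeat split; auto; try apply Hid; try apply Hinv. }
  assert (Hmeq : forall a b, S a -> S b -> mequiv mul S a b -> a = b).
  { intros a b Ha Hb H. rewrite <- (Hleft a Ha), <- (Hleft b Hb). apply H; exact HSr. }
  split; [exact Hsub|].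
  split.
  { split; [exact Hnr|]. split.
    - intros a b Ha Hb Ha0 Hb0 H. apply HS in Hb. destruct Hb as [Hb|[h [Hh Hb]]].
      + contradiction.
      + subst b. rewrite HmR in H by exact Hh. apply Ha0. exact (Hfinj h a Hh H).
    - exists r. split; [exact HSr|]. split; [exact Hr0|].
      intros x Hx Hx0. split; [apply Hleft; exact Hx|]. split; [apply Hright|].
      apply HS in Hx. destruct Hx as [Hx|[h [Hh Hx]]]; [contradiction|].
      destruct (Hinvf h Hh) as [g [Hg Hg']].
      exists (g r). split; [apply HS; right; exists g; auto|].
      split; [intro H; apply Hr0; rewrite <- (proj2 (Hg' r)), H; apply Hf0; exact Hh|].
      split.
      + rewrite HmR by exact Hg. rewrite Hx. apply Hg'.
      + rewrite Hx, HmR by exact Hh. apply Hg'. }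
  split.
  { split; [exact Hnr|]. split.
    -
      assert (Hnt : exists f x, Phi f /\ f x <> x).
      { apply NNPP. intro Hc.
        assert (Hall : forall f x, Phi f -> f x = x).
        { intros f x Hf. apply NNPP. intro H. apply Hc. exists f, x; auto. }
        assert (Htype : forall b, (forall x, mul x b = x) \/ (forall x, mul x b = zero)).
        { intro b. destruct (classic (b = zero)) as [Hb|Hb].
          - right. intro x. subst b. apply Hmul0.
          - destruct (Hrep b Hb) as [r' [k [Hr' [Hk Hbk]]]].
            destruct (classic (M r')) as [HM|HM].
            + right. intro x. exact (proj1 (HmulR x b r' k Hr' Hk Hbk) HM).
            + left. intro x. rewrite (proj2 (HmulR x b r' k Hr' Hk Hbk) HM). apply Hall; exact Hk. }
        destruct H3 as [a [b [c [_ [_ [_ [Hab [Hac Hbc]]]]]]]].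
        destruct (Htype a) as [Ha|Ha]; destruct (Htype b) as [Hb|Hb];
          destruct (Htype c) as [Hc'|Hc'];
          first [ apply Hab; intros x _; rewrite Ha, Hb; reflexivity
                | apply Hac; intros x _; rewrite Ha, Hc'; reflexivity
                | apply Hbc; intros x _; rewrite Hb, Hc'; reflexivity ]. }
      destruct Hnt as [f [x [Hf Hfx]]].
      assert (Hfd : f d <> d).
      { intro H. destruct (Hfpf f d Hf H) as [H'|H']; [contradiction|].
        apply Hfx; apply H'. }
      assert (Hfd0 : f d <> zero).
      { intro H. apply Hd0. exact (Hfinj f d Hf H). }
      assert (HSfd : S (f d)). { right. exists f; auto. }
      exists zero, d, (f d). repeat split; auto.
      + intro H. apply Hd0. symmetry. exact (Hmeq _ _ HS0 HSd H).
      + intro H. apply Hfd0. symmetry. exact (Hmeq _ _ HS0 HSfd H).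
      + intro H. apply Hfd. symmetry. exact (Hmeq _ _ HSd HSfd H).
    - intros a b c Ha Hb Hc Hab.
      assert (Hab' : ~ mequiv mul (fun _ => True) a b).
      { intro H. apply Hab. intros x _. apply H; exact I. }
      destruct (Hsurj c Hc) as [c' Hc'].
      destruct (Hsol a b c' I I I Hab') as [x0 [_ [Hx0 _]]].
      destruct (Hsol a b c I I I Hab') as [x1 [_ [_ Hx1]]].
      assert (Heq : mul (mul d x0) a = add (mul (mul d x0) b) c).
      { rewrite <- !Hmassoc by exact I. rewrite Hx0, HdD, Hc'. reflexivity. }
      exists (mul d x0). split; [apply Himg|]. split; [exact Heq|].
      intros y Hy Hyeq. rewrite (Hx1 y I Hyeq). symmetry. exact (Hx1 _ I Heq). }
  intros r1 f1 Hr1 Hf1 Hd1.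
  assert (Hrr : r1 = r).
  { apply (Huniq r1 r f1 f0 Hr1 Hr Hf1 Hf0p). rewrite <- Hd1; exact Hdr. }
  subst r1. split; [exact HSr|].
  intros x Hx. split; [apply Hleft; exact Hx | apply Hright].
Qed.
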